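(* Let $\phi:\mathbb{R}\to\mathbb{R}$ be differentiable and $f(z)=W_d\phi(W_{d-1}\phi(W_{d-2}\cdots\phi(W_1z)\cdots))$ with $W_i\in\mathbb{R}^{k_i\times k_{i-1}}$, $k_d=k_0$, $z\in\mathbb{R}^{k_0}$. Let $x\in\mathbb{R}^{k_0}$ and run gradient descent with learning rate $\gamma>0$ on $\mathcal{L}(x,f)=\frac12\|x-f(x)\|_2^2$ (jointly over all $W_1,\dots,W_d$). If $W_d^{(0)}=x{a^{(0)}}^T$ and $W_1^{(0)}=b^{(0)}x^T$ with $a^{(0)}\in\mathbb{R}^{k_{d-1}}$, $b^{(0)}\in\mathbb{R}^{k_1}$, then for all time steps $t$ there exist $a^{(t)}\in\mathbb{R}^{k_{d-1}}$, $b^{(t)}\in\mathbb{R}^{k_1}$ with $W_d^{(t)}=x{a^{(t)}}^T$ and $W_1^{(t)}=b^{(t)}x^T$.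
   Context: $\phi$ is applied coordinatewise. Gradient descent updates each $W_i\leftarrow W_i-\gamma\nabla_{W_i}\mathcal{L}$ simultaneously; the intermediate layers $W_2,\dots,W_{d-1}$ are initialized arbitrarily. *)

(* Defs.v *)
From HB Require Import structures.
From mathcomp Require Import all_boot all_order all_algebra.
From mathcomp Require Import all_classical all_reals all_analysis.
Unset Printing Implicit Defensive.
Import Order.TTheory GRing.Theory Num.Theory.
Local Open Scope ring_scope.

(* Only layers 0..L are used; the network has
   depth d = L+1 (paper's W_1 = W 0, W_d = W L). *)
Definition weights (R : realType) (k : nat -> nat) :=
  forall i : nat, 'M[R]_(k i.+1, k i).

Section Net.
Variables (R : realType) (k : nat -> nat) (phi : R -> R).

Fixpoint post (W : weights R k) (z : 'cV[R]_(k 0%N)) (j : nat) : 'cV[R]_(k j) :=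
  match j with
  | 0 => z
  | j'.+1 => map_mx phi (W j' *m post W z j')
  end.

Definition net_out (L : nat) (W : weights R k) (z : 'cV[R]_(k 0%N)) :
  'cV[R]_(k L.+1) := W L *m post W z L.

Definition loss (L : nat) (hk : k L.+1 = k 0%N) (x : 'cV[R]_(k 0%N))
  (W : weights R k) : R :=
  2^-1 * \sum_(i < k 0%N)
     (x i 0 - castmx (hk, erefl 1%N) (net_out L W x) i 0) ^+ 2.

Definition unit_dir (l p0 q0 : nat) : weights R k :=
  fun i => \matrix_(p, q) ((i == l) && (p == p0 :> nat) && (q == q0 :> nat))%:R.

Definition partial_loss L hk x (W : weights R k) (l p0 q0 : nat) : R :=
  derive1 (fun t : R => loss L hk x (fun i => W i + t *: unit_dir l p0 q0 i)) 0.

Definition grad_loss L hk x (W : weights R k) (l : nat) : 'M[R]_(k l.+1, k l) :=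
  \matrix_(p, q) partial_loss L hk x W l p q.

Definition gd_step L hk x (gamma : R) (W : weights R k) : weights R k :=
  fun l => W l - gamma *: grad_loss L hk x W l.

Definition gd_iter L hk x gamma (t : nat) (W0 : weights R k) : weights R k :=
  iter t (gd_step L hk x gamma) W0.

End Net.

(* Main.v *)
Require Import Defs.
From HB Require Import structures.
From mathcomp Require Import all_boot all_order all_algebra.
From mathcomp Require Import all_classical all_reals all_analysis.
From mathcomp Require Import ring lra.
Import Order.TTheory GRing.Theory Num.Theory.
Local Open Scope ring_scope.

Section Help.
Variable R : realType.

Lemma my_dcomp (f g : R -> R) x : derivable f x 1 -> derivable g (f x) 1 ->
  derivable (fun t => g (f t)) x 1.
Proof.
move=> /derivable1_diffP df /derivable1_diffP dg.
apply/derivable1_diffP.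
exact: (differentiable_comp df dg).
Qed.

Lemma my_dsum n (h : 'I_n -> R -> R) x : (forall i, derivable (h i) x 1) ->
  derivable (fun t => \sum_(i < n) h i t) x 1.
Proof.
elim: n h => [|n IH] h H.
  have -> : (fun t => \sum_(i < 0) h i t) = (fun _ => 0) by apply/funext => t; rewrite big_ord0.
  exact: derivable_cst.
have -> : (fun t => \sum_(i < n.+1) h i t) = (fun t => \sum_(i < n) h (widen_ord (leqnSn n) i) t + h ord_max t).
  by apply/funext => t; rewrite big_ord_recr.
have := derivableD (IH (fun i => h (widen_ord (leqnSn n) i)) (fun i => H _)) (H ord_max).
by [].
Qed.

Lemma my_dM (f g : R -> R) x : derivable f x 1 -> derivable g x 1 ->
  derivable (fun t => f t * g t) x 1.
Proof. by move=> a b; have := derivableM a b. Qed.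

Lemma my_dD (f g : R -> R) x : derivable f x 1 -> derivable g x 1 ->
  derivable (fun t => f t + g t) x 1.
Proof. by move=> a b; have := derivableD a b. Qed.

Lemma my_dB (f g : R -> R) x : derivable f x 1 -> derivable g x 1 ->
  derivable (fun t => f t - g t) x 1.
Proof. by move=> a b; have := derivableB a b. Qed.

Lemma my_dC (c : R) x : derivable (fun _ : R => c) x 1.
Proof. exact: derivable_cst. Qed.

Lemma my_dI x : derivable (fun t : R => t) x 1.
Proof. exact: derivable_id. Qed.

End Help.
Arguments my_dcomp {R f g x}.
Arguments my_dsum {R n h x}.
Arguments my_dM {R f g x}.
Arguments my_dD {R f g x}.
Arguments my_dC {R}.
Arguments my_dI {R}.
Arguments my_dB {R f g x}.


Section B.
Variables (R : realType) (k : nat -> nat) (phi : R -> R).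
Hypothesis hphi : forall y : R, derivable phi y 1.

Lemma post_ext (W W' : weights R k) x j :
  (forall i, (0 < i < j)%N -> W' i = W i) -> W' 0%N *m x = W 0%N *m x ->
  post R k phi W' x j = post R k phi W x j.
Proof.
elim: j => [//|j IH] H H0 /=.
case: j IH H => [|j] IH H; first by rewrite /= H0.
rewrite (H j.+1) ?ltnSn // IH //.
move=> i /andP[a b]; apply: H; rewrite a /=; exact: ltnW.
Qed.

Lemma unit_dir_ne l p q i : i != l -> unit_dir R k l p q i = 0.
Proof. by move=> /negbTE h; apply/matrixP => a b; rewrite !mxE h. Qed.

Lemma derivable_post (W D : weights R k) (x : 'cV[R]_(k 0%N)) j (i : 'I_(k j)) (t0 : R) :
  derivable (fun t : R => post R k phi (fun l => W l + t *: D l) x j i 0) t0 1.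
Proof.
elim: j i t0 => [|j IH] i t0 /=; first exact: my_dC.
have -> : (fun t => map_mx phi ((W j + t *: D j) *m post R k phi (fun l => W l + t *: D l) x j) i 0)
  = (fun t => phi (\sum_(l < k j) (W j i l + t * D j i l) * post R k phi (fun l => W l + t *: D l) x j l 0)).
  by apply/funext => t; rewrite !mxE; congr phi; apply: eq_bigr => l _; rewrite !mxE.
have H : derivable (fun t : R => \sum_(l < k j)
           (W j i l + t * D j i l) *
           post R k phi (fun l0 : nat => W l0 + t *: D l0) x j l 0) t0 1; last exact: (my_dcomp H (hphi _)).
apply: my_dsum => l; apply: my_dM; last exact: IH.
apply: my_dD; first exact: my_dC.
apply: my_dM; [exact: my_dI | exact: my_dC].
Qed.

Lemma derivable_loss L hk (x : 'cV[R]_(k 0%N)) (W D : weights R k) (t0 : R) :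
  derivable (fun t : R => loss R k phi L hk x (fun l => W l + t *: D l)) t0 1.
Proof.
rewrite /loss /net_out.
apply: my_dM; first exact: my_dC.
apply: my_dsum => i.
have -> : (fun t => (x i 0 - castmx (hk, erefl 1%N) ((W L + t *: D L) *m post R k phi (fun l => W l + t *: D l) x L) i 0) ^+ 2)
  = (fun t => (x i 0 - \sum_(l < k L) (W L (cast_ord (esym hk) i) l + t * D L (cast_ord (esym hk) i) l) * post R k phi (fun l => W l + t *: D l) x L l 0) * (x i 0 - \sum_(l < k L) (W L (cast_ord (esym hk) i) l + t * D L (cast_ord (esym hk) i) l) * post R k phi (fun l => W l + t *: D l) x L l 0)).
  apply/funext => t; rewrite castmxE expr2; congr (_ * _); rewrite !mxE; congr (_ - _);
  by apply: eq_bigr => l _; rewrite !mxE ?cast_ord_id.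
have hh : derivable (fun t : R => x i 0 - \sum_(l < k L) (W L (cast_ord (esym hk) i) l + t * D L (cast_ord (esym hk) i) l) * post R k phi (fun l => W l + t *: D l) x L l 0) t0 1.
  apply: my_dB; first exact: my_dC.
  apply: my_dsum => l; apply: my_dM; last exact: derivable_post.
  apply: my_dD; first exact: my_dC.
  apply: my_dM; [exact: my_dI | exact: my_dC].
exact: (my_dM hh hh).
Qed.

End B.


Section C.
Variable R : realType.

Lemma derive_scale (G : R -> R) (c : R) : derivable G 0 1 ->
  derive1 (fun t => G (t * c)) 0 = c * derive1 G 0.
Proof.
move=> dG.
have df : derivable (fun t : R => t * c) 0 1 by apply: my_dM; [exact: my_dI|exact: my_dC].
have dG' : derivable G ((fun t : R => t * c) 0) 1 by rewrite mul0r.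
have := derive1_comp df dG'.
rewrite /comp => ->; rewrite mul0r mulrC; congr (_ * _).
rewrite (derive1Mr (f := id)) ?mul1r; last exact: derivable_id.
by rewrite derive1E derive_id mul1r.
Qed.

Lemma quad_der n (al be : 'I_n -> R) :
  derive1 (fun t : R => 2^-1 * \sum_(i < n) (al i - t * be i)^+2) 0 = - \sum_(i < n) al i * be i.
Proof.
set A := 2^-1 * \sum_(i < n) al i ^+ 2.
set B := - \sum_(i < n) al i * be i.
set C := 2^-1 * \sum_(i < n) be i ^+ 2.
have -> : (fun t : R => 2^-1 * \sum_(i < n) (al i - t * be i)^+2) = horner (A%:P + B *: 'X + C *: 'X^2).
  apply/funext => t /=; rewrite !(hornerD, hornerZ, hornerC, hornerX, hornerXn) /A /B /C.
  rewrite -sumrN !mulr_sumr !mulr_suml -!big_split /=.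
  by apply: eq_bigr => i _; field.
rewrite derive1E derive_val !(derivD, derivC, derivZ, derivX, derivXn) !(hornerD, hornerZ, hornerC, hornerX, hornerXn, hornerMn) /=.
by rewrite expr1 addr0 mulr0 addr0 add0r mulr1.
Qed.

End C.


Section D.
Variable R : realType.

Lemma single_sum n (q : 'I_n) (f : 'I_n -> R) (c : bool) :
  \sum_(l < n) (c && (l == q :> nat))%:R * f l = c%:R * f q.
Proof.
rewrite (bigD1 q) //= eqxx andbT big1 ?addr0 // => l /negbTE hl.
by have -> : (l == q :> nat) = false by []; rewrite andbF mul0r.
Qed.

Lemma mulE_unit m n (M E : 'M[R]_(m, n)) (v : 'cV[R]_n) (p : nat) (q : 'I_n) (t : R) (i : 'I_m) :
  (forall i l, E i l = ((i == p :> nat) && (l == q :> nat))%:R) ->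
  ((M + t *: E) *m v) i 0 = (M *m v) i 0 + t * ((i == p :> nat)%:R * v q 0).
Proof.
move=> hE; rewrite !mxE -(@single_sum _ q (fun l => v l 0)) mulr_sumr -big_split /=.
by apply: eq_bigr => l _; rewrite !mxE hE; ring.
Qed.


Variables (k : nat -> nat) (phi : R -> R).
Hypothesis hphi : forall y : R, derivable phi y 1.
Variables (L : nat) (hL : (1 <= L)%N) (hk : k L.+1 = k 0%N) (x : 'cV[R]_(k 0%N)).

Lemma gradL (W : weights R k) (p : 'I_(k L.+1)) (q : 'I_(k L)) :
  grad_loss R k phi L hk x W L p q =
  - (x (cast_ord hk p) 0 - (W L *m post R k phi W x L) p 0) * post R k phi W x L q 0.
Proof.
rewrite /grad_loss mxE /partial_loss.
set h := post R k phi W x L.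
have Hpost : forall t, post R k phi (fun i => W i + t *: unit_dir R k L p q i) x L = h.
  move=> t; apply: post_ext => [i /andP[_ hi]|].
    by rewrite unit_dir_ne ?scaler0 ?addr0 // neq_ltn hi.
  by rewrite unit_dir_ne ?scaler0 ?addr0 // eq_sym -lt0n.
pose al i := x i 0 - (W L *m h) (cast_ord (esym hk) i) 0.
pose be (i : 'I_(k 0%N)) := ((cast_ord (esym hk) i == p :> nat)%:R * h q 0).
have -> : (fun t => loss R k phi L hk x (fun i => W i + t *: unit_dir R k L p q i))
   = (fun t : R => 2^-1 * \sum_(i < k 0%N) (al i - t * be i)^+2).
  apply/funext => t; rewrite /loss /net_out Hpost; congr (_ * _); apply: eq_bigr => i _.
  rewrite castmxE /= cast_ord_id (@mulE_unit _ _ _ _ _ p q); last by move=> a b; rewrite mxE eqxx.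
  rewrite /al /be; congr (_ ^+ 2); ring.
rewrite quad_der.
pose i0 := cast_ord hk p.
rewrite (bigD1 i0) //= big1 ?addr0; last first.
  move=> i hi; rewrite /be /=.
  have -> : (i == p :> nat) = false.
    apply/negbTE; apply: contra hi => /eqP e; apply/eqP/val_inj => /=; exact: e.
  by rewrite mul0r mulr0.
have e0 : cast_ord (esym hk) i0 = p by apply: val_inj.
rewrite /al /be e0 eqxx mul1r /i0; ring.
Qed.


Lemma Hloss (W1 W2 : weights R k) : (forall i, (0 < i)%N -> W1 i = W2 i) ->
  W1 0%N *m x = W2 0%N *m x -> loss R k phi L hk x W1 = loss R k phi L hk x W2.
Proof.
move=> h1 h0; rewrite /loss /net_out h1 // (@post_ext R k phi W2 W1 x L) //.
by move=> i /andP[a _]; rewrite h1.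
Qed.

Lemma unitE0 (p : 'I_(k 1)) (q : 'I_(k 0%N)) : forall (i : 'I_(k 1)) (l : 'I_(k 0%N)),
  unit_dir R k 0 p q 0%N i l = ((i == p :> nat) && (l == q :> nat))%:R.
Proof. by move=> i l; rewrite mxE. Qed.

Lemma grad0 (W : weights R k) : exists c : 'cV[R]_(k 1),
  forall (p : 'I_(k 1)) (q : 'I_(k 0%N)), grad_loss R k phi L hk x W 0 p q = x q 0 * c p 0.
Proof.
case: (pselect (exists q, x q 0 != 0)) => [[qs hqs] | hno].
  exists (\col_(p < k 1) (derive1 (fun u => loss R k phi L hk x (fun i => W i + u *: unit_dir R k 0 p qs i)) 0 / x qs 0)).
  move=> p q; rewrite /grad_loss mxE /partial_loss.
  have -> : (fun t => loss R k phi L hk x (fun i => W i + t *: unit_dir R k 0 p q i))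
    = (fun t => (fun u => loss R k phi L hk x (fun i => W i + u *: unit_dir R k 0 p qs i)) (t * (x q 0 / x qs 0))).
    apply/funext => t; apply: Hloss.
      by move=> i hi; rewrite !unit_dir_ne ?scaler0 ?addr0 // -lt0n.
    apply/matrixP => i j; rewrite (ord1 j) (@mulE_unit _ _ _ _ _ _ _ _ _ (unitE0 p q)) (@mulE_unit _ _ _ _ _ _ _ _ _ (unitE0 p qs)).
    congr (_ + _); field; exact: hqs.
  have DS := @derive_scale R (fun u : R => loss R k phi L hk x (fun i => W i + u *: unit_dir R k 0 p qs i)) (x q 0 / x qs 0).
  rewrite /= in DS; rewrite DS; last exact: derivable_loss.
  rewrite mxE; field; exact: hqs.
exists 0 => p q.
have xq : x q 0 = 0.
  by apply/eqP/negPn/negP => h; apply: hno; exists q.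
rewrite /grad_loss !mxE /partial_loss.
have -> : (fun t => loss R k phi L hk x (fun i => W i + t *: unit_dir R k 0 p q i))
    = cst (loss R k phi L hk x W).
  apply/funext => t /=; apply: Hloss.
    by move=> i hi; rewrite !unit_dir_ne ?scaler0 ?addr0 // -lt0n.
  apply/matrixP => i j; rewrite (ord1 j) (@mulE_unit _ _ _ _ _ _ _ _ _ (unitE0 p q)) xq.
  by rewrite !mulr0 addr0.
by rewrite derive1_cst mulr0.
Qed.
End D.

Theorem mainTheorem9 (R : realType) (phi : R -> R)
  (hphi : forall y : R, derivable phi y 1)
  (k : nat -> nat) (L : nat) (hL : (1 <= L)%N) (hk : k L.+1 = k 0%N)
  (x : 'cV[R]_(k 0%N)) (gamma : R) (hgamma : 0 < gamma)
  (W0 : weights R k) (a0 : 'cV[R]_(k L)) (b0 : 'cV[R]_(k 1%N))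
  (hWd : W0 L = castmx (esym hk, erefl (k L)) (x *m a0^T))
  (hW1 : W0 0%N = b0 *m x^T) :
  forall t : nat, exists (a : 'cV[R]_(k L)) (b : 'cV[R]_(k 1%N)),
    gd_iter R k phi L hk x gamma t W0 L = castmx (esym hk, erefl (k L)) (x *m a^T) /\
    gd_iter R k phi L hk x gamma t W0 0%N = b *m x^T.
Proof.
elim => [|t [a [b [HL H0]]]]; first by exists a0, b0.
rewrite /gd_iter iterS -/(gd_iter R k phi L hk x gamma t W0).
set W := gd_iter R k phi L hk x gamma t W0 in HL H0 *.
have [c Hc] := @grad0 R k phi hphi L hL hk x W.
set h := post R k phi W x L.
set s := \sum_(l < k L) a l 0 * h l 0.
exists (a + (gamma * (1 - s)) *: h), (b - gamma *: c); split.
  apply/matrixP => p q; rewrite /gd_step.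
  have gL := @gradL R k phi L hL hk x W p q.
  rewrite /grad_loss mxE in gL.
  rewrite !mxE gL HL castmxE /= esymK.
  rewrite -/h [in RHS]castmxE /= esymK cast_ord_id !mxE !big_ord1 !mxE.
  under eq_bigr do rewrite castmxE /= esymK cast_ord_id !mxE big_ord1 -mulrA.
  rewrite -mulr_sumr.
  under eq_bigr do rewrite mxE.
  have e0 : (0 : 'I_1) = ord0 by apply: val_inj.
  rewrite /s !e0; ring.
apply/matrixP => p q; rewrite /gd_step.
have gc := Hc p q; rewrite /grad_loss mxE in gc.
rewrite !mxE gc H0 !mxE !big_ord1 !mxE; ring.
Qed.
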